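(* Let $\mathbb{F}$ be a field, let $G\le\mathrm{GL}(n,\mathbb{F})$, and let $H$ be a normal subgroup of $G$ that is unipotent-by-abelian. If $x\in\mathrm{Rad}\langle H\rangle_{\mathbb{F}}$, then there is a non-zero $G$-submodule of $\mathbb{F}^n$ contained in the nullspace of $x$.
   Context: $G$ and $x$ act on $V=\mathbb{F}^n$ by matrix multiplication (on the same side), and the nullspace of $x$ is $\{v\in V: v$ is sent to $0$ by $x\}$. A group is unipotent-by-abelian if it has a unipotent normal subgroup with abelian quotient. $\langle H\rangle_{\mathbb{F}}$ is the $\mathbb{F}$-enveloping algebra of $H$ (the $\mathbb{F}$-subalgebra of $\mathrm{Mat}(n,\mathbb{F})$ generated by $H$), and $\mathrm{Rad}$ is its Jacobson radical. *)

(* Defs.v *)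
From HB Require Import structures.
From mathcomp Require Import all_boot all_order all_algebra.
Set Implicit Arguments. Unset Strict Implicit. Unset Printing Implicit Defensive.
Import GRing.Theory.
Local Open Scope ring_scope.

(* Matrices act on row vectors on the right: v |-> v *m g.  Subsets of
   'M[F]_n.+1 (possibly infinite) are Prop-valued predicates. *)
Section Defs.
Variables (F : fieldType) (n : nat).
Local Notation M := 'M[F]_n.+1.

Definition is_subgroup_GL (G : M -> Prop) : Prop :=
  [/\ G 1%:M,
      (forall g, G g -> g \in unitmx),
      (forall g h, G g -> G h -> G (g *m h))
    & (forall g, G g -> G (invmx g))].

Definition is_subgroup_of (H G : M -> Prop) : Prop :=
  is_subgroup_GL H /\ (forall h, H h -> G h).

Definition is_normal_subgroup (H G : M -> Prop) : Prop :=
  is_subgroup_of H G /\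
  (forall g h, G g -> H h -> H (invmx g *m h *m g)).

Definition unipotent_mx (u : M) : Prop := exists k : nat, (u - 1%:M) ^+ k = 0.

Definition unipotent_group (U : M -> Prop) : Prop :=
  forall u, U u -> unipotent_mx u.

Definition unipotent_by_abelian (H : M -> Prop) : Prop :=
  exists U : M -> Prop,
    [/\ is_normal_subgroup U H, unipotent_group U
      & forall a b, H a -> H b -> U (a *m b *m invmx a *m invmx b)].

Definition is_subalgebra (S : M -> Prop) : Prop :=
  [/\ S 0, S 1%:M,
      (forall a b, S a -> S b -> S (a + b)),
      (forall (c : F) a, S a -> S (c *: a))
    & (forall a b, S a -> S b -> S (a *m b))].

Definition envelope (H : M -> Prop) : M -> Prop :=
  fun x => forall S : M -> Prop, is_subalgebra S -> (forall h, H h -> S h) -> S x.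

Definition is_left_ideal (A L : M -> Prop) : Prop :=
  [/\ (forall x, L x -> A x), L 0,
      (forall x y, L x -> L y -> L (x + y))
    & (forall a x, A a -> L x -> L (a *m x))].

Definition is_maximal_left_ideal (A L : M -> Prop) : Prop :=
  [/\ is_left_ideal A L,
      (exists a, A a /\ ~ L a)
    & (forall L' : M -> Prop, is_left_ideal A L' ->
         (forall x, L x -> L' x) ->
         (forall x, L' x <-> L x) \/ (forall x, L' x <-> A x))].

Definition jacobson_radical (A : M -> Prop) : M -> Prop :=
  fun x => A x /\ forall L, is_maximal_left_ideal A L -> L x.

End Defs.

(* Main.v *)
Require Import Defs.
From HB Require Import structures.
From mathcomp Require Import all_boot all_order all_algebra.
From Stdlib Require Import Classical.
From mathcomp Require Import zify.
Import GRing.Theory.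
Local Open Scope ring_scope.

Section Helpers.
Variable F : fieldType.

Lemma max_rank m (Q : 'M[F]_m -> Prop) W0 : Q W0 ->
  exists W, [/\ Q W, (W0 <= W)%MS &
    forall W', Q W' -> (W <= W')%MS -> (W' <= W)%MS].
Proof.
suff: forall k W0, (m - \rank W0 <= k)%N -> Q W0 -> exists W, [/\ Q W, (W0 <= W)%MS &
    forall W', Q W' -> (W <= W')%MS -> (W' <= W)%MS].
  by move=> h; apply: (h m) => //; apply: leq_subr.
elim=> [|k IH] {}W0 hk QW0.
- exists W0; split=> // W' QW' sW.
  rewrite -(geq_leqif (mxrank_leqif_sup sW)).
  have := rank_leq_col W'; have := rank_leq_col W0; lia.
- case: (classic (exists W', [/\ Q W', (W0 <= W')%MS & ~~ (W' <= W0)%MS])).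
  + move=> [W' [QW' sW nW]].
    have lt : (\rank W0 < \rank W')%N.
      by rewrite (ltn_leqif (mxrank_leqif_sup sW)).
    have [W [QW sW2 mW]] := IH W'
       ltac:(have := rank_leq_col W'; lia) QW'.
    exists W; split=> //; exact: submx_trans sW sW2.
  + move=> hn; exists W0; split=> // W' QW' sW.
    apply/negPn/negP => nW; apply: hn; exists W'; split=> //; exact/negP.
Qed.

Lemma min_rank m (Q : 'M[F]_m -> Prop) W0 : Q W0 ->
  exists W, [/\ Q W, (W <= W0)%MS &
    forall W', Q W' -> (W' <= W)%MS -> (W <= W')%MS].
Proof.
suff: forall k W0, (\rank W0 <= k)%N -> Q W0 -> exists W, [/\ Q W, (W <= W0)%MS &
    forall W', Q W' -> (W' <= W)%MS -> (W <= W')%MS].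
  by move=> h; apply: (h m) => //; apply: rank_leq_col.
elim=> [|k IH] {}W0 hk QW0.
- exists W0; split=> // W' QW' sW.
  rewrite -(geq_leqif (mxrank_leqif_sup sW)). lia.
- case: (classic (exists W', [/\ Q W', (W' <= W0)%MS & ~~ (W0 <= W')%MS])).
  + move=> [W' [QW' sW nW]].
    have lt : (\rank W' < \rank W0)%N.
      by rewrite (ltn_leqif (mxrank_leqif_sup sW)).
    have [W [QW sW2 mW]] := IH W' ltac:(lia) QW'.
    exists W; split=> //; exact: submx_trans sW2 sW.
  + move=> hn; exists W0; split=> // W' QW' sW.
    apply/negPn/negP => nW; apply: hn; exists W'; split=> //; exact/negP.
Qed.

Lemma span_of m (P : 'rV[F]_m -> Prop) : P 0 ->
  (forall u v, P u -> P v -> P (u + v)) -> (forall c u, P u -> P (c *: u)) ->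
  exists T : 'M[F]_m, forall v, P v <-> (v <= T)%MS.
Proof.
move=> P0 PD PZ.
have [T [QT _ mT]] := @max_rank m (fun T => forall v, (v <= T)%MS -> P v) 0
  ltac:(by move=> v; rewrite submx0 => /eqP ->).
exists T => v; split; last exact: QT.
move=> Pv.
have Q2 : forall w, (w <= T + v)%MS -> P w.
  move=> w /sub_addsmxP [u ->]; apply: PD.
    by apply: QT; apply: submxMl.
  by rewrite [u.2]mx11_scalar mul_scalar_mx; apply: PZ.
have := mT _ Q2 (addsmxSl T v) => h.
exact: submx_trans (addsmxSr T v) h.
Qed.

End Helpers.

Definition stable {F : fieldType} {n} (A : 'M[F]_n.+1 -> Prop) (T : 'M[F]_n.+1) :=
  forall a, A a -> (T *m a <= T)%MS.

Definition simple_mod {F : fieldType} {n} (A : 'M[F]_n.+1 -> Prop) (S : 'M[F]_n.+1) :=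
  [/\ S != 0, stable A S &
      forall T, T != 0 -> stable A T -> (T <= S)%MS -> (S <= T)%MS].

Section Alg.
Variables (F : fieldType) (n : nat) (A : 'M[F]_n.+1 -> Prop).
Hypothesis hA : is_subalgebra A.

Lemma A0 : A 0. Proof. by case: hA. Qed.
Lemma A1 : A 1%:M. Proof. by case: hA. Qed.
Lemma AD a b : A a -> A b -> A (a + b). Proof. by case: hA => _ _ h _ _; apply: h. Qed.
Lemma AZ c a : A a -> A (c *: a). Proof. by case: hA => _ _ _ h _; apply: h. Qed.
Lemma AM a b : A a -> A b -> A (a *m b). Proof. by case: hA => _ _ _ _ h; apply: h. Qed.
Lemma AB a b : A a -> A b -> A (a - b).
Proof. by move=> ha hb; rewrite -scaleN1r; apply: AD => //; apply: AZ. Qed.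

Lemma rad_unit x a : jacobson_radical A x -> A a -> (1%:M - a *m x) \in unitmx.
Proof.
move=> [Ax hx] Aa; apply/negPn/negP => nu.
set y := 1%:M - a *m x.
have Ay : A y by apply: AB; [exact: A1 | exact: AM].
pose L0 b := exists c, A c /\ b = c *m y.
have [T0 hT0] : exists T : 'M[F]_(n.+1 * n.+1), forall v, L0 (vec_mx v) <-> (v <= T)%MS.
  apply: span_of.
- by exists 0; split; [exact: A0 | rewrite linear0 mul0mx].
- move=> u v [c1 [h1 e1]] [c2 [h2 e2]]; exists (c1 + c2); split; first exact: AD.
  by rewrite mulmxDl -e1 -e2 linearD.
- move=> c u [c1 [h1 e1]]; exists (c *: c1); split; first exact: AZ.
  by rewrite -scalemxAl -e1 linearZ.
pose Q (T : 'M[F]_(n.+1 * n.+1)) := [/\ forall v, (v <= T)%MS -> A (vec_mx v),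
   forall b, L0 b -> (mxvec b <= T)%MS,
   forall c v, A c -> (v <= T)%MS -> (mxvec (c *m vec_mx v) <= T)%MS
 & ~~ (mxvec 1%:M <= T)%MS].
have QT0 : Q T0.
  split.
  - move=> v /hT0 [c [hc ->]]; exact: AM.
  - by move=> b Lb; apply/hT0; rewrite mxvecK.
  - move=> c v Ac /hT0 [c1 [h1 e1]]; apply/hT0; rewrite mxvecK e1.
    by exists (c *m c1); split; [exact: AM | rewrite mulmxA].
  - apply/negP => /hT0; rewrite mxvecK => [[c [_ e]]].
    by have [_ uy] := mulmx1_unit (esym e); rewrite uy in nu.
have [T [[TA TL0 TI T1] _ mT]] := @max_rank F _ Q _ QT0.
pose L b := (mxvec b <= T)%MS.
have LI : is_left_ideal A L.
  split.
  - by move=> b /TA; rewrite mxvecK.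
  - by rewrite /L linear0 sub0mx.
  - by move=> b c hb hc; rewrite /L linearD addmx_sub.
  - by move=> c b Ac hb; have := TI c _ Ac hb; rewrite mxvecK.
have LM : is_maximal_left_ideal A L.
  split=> //; first by exists 1%:M; split; [exact: A1 | exact/negP].
  move=> L' [L'A L'0 L'D L'M] LL'.
  case: (classic (L' 1%:M)) => h1.
    right => b; split; first exact: L'A.
    by move=> Ab; rewrite -[b]mulmx1; apply: L'M.
  left.
  have [T' hT'] : exists T : 'M[F]_(n.+1 * n.+1), forall v, L' (vec_mx v) <-> (v <= T)%MS.
    apply: span_of.
  - by rewrite linear0.
  - by move=> u v hu hv; rewrite linearD; apply: L'D.
  - move=> c u hu; have -> : vec_mx (c *: u) = (c *: 1%:M) *m vec_mx u by rewrite -scalemxAl mul1mx linearZ.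
    by apply: L'M => //; apply: AZ; exact: A1.
  have QT' : Q T'.
    split.
    - by move=> v /hT'; apply: L'A.
    - by move=> b Lb; apply/hT'; rewrite mxvecK; apply: LL'; apply: TL0.
    - by move=> c v Ac /hT' hv; apply/hT'; rewrite mxvecK; apply: L'M.
    - by apply/negP => /hT'; rewrite mxvecK.
  have sTT' : (T <= T')%MS.
    apply/row_subP => i; apply/hT'; apply: LL'.
    by rewrite /L vec_mxK; apply: row_sub.
  have := mT _ QT' sTT' => sT'T.
  move=> b; split; last exact: LL'.
  by move=> hb; rewrite /L; apply: submx_trans sT'T; have := (proj1 (hT' (mxvec b))); rewrite mxvecK; apply.
have Lx := hx L LM.
have Lax : L (a *m x) by case: LI => _ _ _ h; apply: h.
have Ly : L y by apply: TL0; exists 1%:M; split; [exact: A1 | rewrite mul1mx].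
have : L (y + a *m x) by case: LI => _ _ h _; apply: h.
by rewrite /y subrK => h; move/negP: T1.
Qed.

Lemma simple_kill x S : jacobson_radical A x -> simple_mod A S -> S *m x = 0.
Proof.
move=> hx [Snz Sst Smin].
have Ax := proj1 hx.
apply/row_matrixP => i; rewrite row0 row_mul.
case: (eqVneq (row i S *m x) 0) => // nz; exfalso.
set s := row i S in nz *.
have [T hT] : exists T : 'M[F]_n.+1, forall v, (exists a, A a /\ v = s *m x *m a) <-> (v <= T)%MS.
  apply: span_of.
- by exists 0; split; [exact: A0 | rewrite mulmx0].
- move=> u v [a1 [h1 ->]] [a2 [h2 ->]]; exists (a1 + a2); split; first exact: AD.
  by rewrite mulmxDr.
- move=> c u [a1 [h1 ->]]; exists (c *: a1); split; first exact: AZ.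
  by rewrite scalemxAr.
have sxT : (s *m x <= T)%MS by apply/hT; exists 1%:M; split; [exact: A1 | rewrite mulmx1].
have Tnz : T != 0.
  apply/eqP => T0; move: sxT; rewrite T0 submx0 => /eqP; exact/eqP.
have Tst : stable A T.
  move=> b Ab; apply/row_subP => j; rewrite row_mul.
  have [a [Aa ->]] := proj2 (hT (row j T)) (row_sub j T).
  by apply/hT; exists (a *m b); split; [exact: AM | rewrite mulmxA].
have TS : (T <= S)%MS.
  apply/row_subP => j.
  have [a [Aa ->]] := proj2 (hT (row j T)) (row_sub j T).
  rewrite -mulmxA; apply: (submx_trans _ (Sst _ (AM _ _ Ax Aa))).
  by apply: submxMr; apply: row_sub.
have [a [Aa es]] := proj2 (hT s) (submx_trans (row_sub i S) (Smin _ Tnz Tst TS)).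
have U := rad_unit _ _ hx Aa.
have e0 : s *m x *m (1%:M - a *m x) = 0.
  by rewrite mulmxBr mulmx1 mulmxA -es subrr.
move/eqP: nz; apply.
by rewrite -(mulmxK U (s *m x)) e0 mul0mx.
Qed.

End Alg.


Lemma env_subalg (F : fieldType) n (H : 'M[F]_n.+1 -> Prop) :
  is_subalgebra (envelope H).
Proof.
split.
- by move=> S [] .
- by move=> S [] .
- move=> a b ha hb S hS hHS; case: (hS) => _ _ h _ _; apply: h.
  + exact: ha. + exact: hb.
- move=> c a ha S hS hHS; case: (hS) => _ _ _ h _; apply: h; exact: ha.
- move=> a b ha hb S hS hHS; case: (hS) => _ _ _ _ h; apply: h.
  + exact: ha. + exact: hb.
Qed.

Lemma env_conj (F : fieldType) n (G H : 'M[F]_n.+1 -> Prop)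
  (hG : is_subgroup_GL G) (hH : is_normal_subgroup H G) g b :
  G g -> envelope H b -> envelope H (invmx g *m b *m g).
Proof.
move=> Gg Eb S hS HS.
have ug : g \in unitmx by case: hG => _ h _ _; apply: h.
case: hS => S0 S1 SD SZ SM.
apply: (Eb (fun y => S (invmx g *m y *m g))).
- split.
  + by rewrite mulmx0 mul0mx.
  + by rewrite mulmx1 mulVmx.
  + by move=> a c ha hc; rewrite mulmxDr mulmxDl; apply: SD.
  + by move=> c a ha; rewrite -scalemxAr -scalemxAl; apply: SZ.
  + move=> a c ha hc.
    have -> : invmx g *m (a *m c) *m g = (invmx g *m a *m g) *m (invmx g *m c *m g).
      by rewrite !mulmxA mulmxK.
    exact: SM.
- by move=> h Hh; apply: HS; case: hH => _ h2; apply: h2.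
Qed.

Lemma env_conj' (F : fieldType) n (G H : 'M[F]_n.+1 -> Prop)
  (hG : is_subgroup_GL G) (hH : is_normal_subgroup H G) g b :
  G g -> envelope H b -> envelope H (g *m b *m invmx g).
Proof.
move=> Gg Eb.
have ug : g \in unitmx by case: hG => _ h _ _; apply: h.
have Gi : G (invmx g) by case: hG => _ _ _ h; apply: h.
by have := @env_conj F n G H hG hH _ _ Gi Eb; rewrite invmxK.
Qed.

Theorem lemma3p2 (F : fieldType) (n : nat) (G H : 'M[F]_n.+1 -> Prop)
  (hG : is_subgroup_GL G) (hH : is_normal_subgroup H G)
  (hUA : unipotent_by_abelian H)
  (x : 'M[F]_n.+1) (hx : jacobson_radical (envelope H) x) :
  exists W : 'M[F]_n.+1,
    [/\ W != 0,
        (forall g, G g -> (W *m g <= W)%MS)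
      & (W <= kermx x)%MS].
Proof.
have hA := @env_subalg F n H.
set A := envelope H in hA hx.
have unitG : forall g, G g -> g \in unitmx by case: hG => _ h _ _.
have one_nz : (1%:M : 'M[F]_n.+1) != 0.
  by apply/eqP => e; have := mxrank1 F n.+1; rewrite e mxrank0.
have [S [[Snz Sst] _ Smin]] := @min_rank F _ (fun T => T != 0 /\ stable A T) 1%:M
  (conj one_nz (fun a _ => submx1 _)).
have simS : forall g, G g -> simple_mod A (S *m g).
  move=> g Gg; have ug := unitG g Gg.
  have Gi : G (invmx g) by case: hG => _ _ _ h; apply: h.
  split.
  - apply/eqP => e; move/eqP: Snz; apply.
    by rewrite -(mulmxK ug S) e mul0mx.
  - move=> a Aa.
    have -> : S *m g *m a = S *m (g *m a *m invmx g) *m g by rewrite !mulmxA mulmxKV.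
    apply: submxMr; apply: Sst; exact: (@env_conj' F n G H hG hH _ _ Gg Aa).
  - move=> T Tnz Tst TS.
    have e : T = T *m invmx g *m g by rewrite mulmxKV.
    rewrite [X in (_ <= X)%MS]e; apply: submxMr.
    apply: (Smin (T *m invmx g)); last first.
      by rewrite -[S](mulmxK ug); apply: submxMr.
    split.
    + apply/eqP => e0; move/eqP: Tnz; apply; by rewrite e e0 mul0mx.
    + move=> a Aa.
      have -> : T *m invmx g *m a = T *m (invmx g *m a *m g) *m invmx g by rewrite !mulmxA mulmxK.
      apply: submxMr; apply: Tst; exact: (@env_conj F n G H hG hH _ _ Gg Aa).
pose P (v : 'rV[F]_n.+1) := forall g, G g -> v *m g *m x = 0.
have [W hW] : exists W : 'M[F]_n.+1, forall v, P v <-> (v <= W)%MS.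
  apply: span_of.
  - by move=> g _; rewrite !mul0mx.
  - by move=> u v hu hv g Gg; rewrite !mulmxDl hu // hv // addr0.
  - by move=> c u hu g Gg; rewrite -!scalemxAl hu // scaler0.
have [i hi] : exists i, row i S != 0.
  apply: NNPP => hn; move/eqP: Snz; apply; apply/row_matrixP => i; rewrite row0.
  by apply/eqP/negPn/negP => h; apply: hn; exists i.
have Pr : P (row i S).
  move=> g Gg; have := @simple_kill F n A hA _ _ hx (simS g Gg).
  by move/(congr1 (row i)); rewrite row0 !row_mul.
exists W; split.
- apply/eqP => W0; have := proj1 (hW _) Pr; rewrite W0 submx0; exact/negP.
- move=> g Gg; apply/row_subP => j; rewrite row_mul; apply/hW => h Gh.
  rewrite -(mulmxA _ g); apply: (proj2 (hW (row j W)) (row_sub j W)).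
  by case: hG => _ _ hM _; apply: hM.
- apply/row_subP => j; rewrite sub_kermx.
  have := proj2 (hW (row j W)) (row_sub j W) 1%:M.
  by case: hG => G1 _ _ _; move/(_ G1); rewrite mulmx1 => ->.
Qed.
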